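(* Let $K$ be a field of characteristic $0$, let $L=\mathcal{L}(x,y)$ be the free Lie algebra over $K$ freely generated by $x,y$, let $\delta$ be the derivation of $L$ with $\delta(x)=0$, $\delta(y)=x$, and $L^\delta=\ker\delta$. Every element of $L^\delta$ of degree at most $7$ belongs to the Lie subalgebra of $L$ generated by $x$, $[y,x]$ and $[[y,x,y],[y,x,x]]$.
   Context: Brackets are left-normed: $[a_1,a_2,\ldots,a_n]=[[\ldots[a_1,a_2],\ldots],a_n]$. *)

(* Defs.v *)
From HB Require Import structures.
From mathcomp Require Import all_boot all_order all_algebra.
Set Implicit Arguments. Unset Strict Implicit. Unset Printing Implicit Defensive.
Import Order.TTheory GRing.Theory Num.Theory.
Local Open Scope ring_scope.

(* Model of the free associative algebra K<<x,y>> (noncommutative formal power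
   series; words over the alphabet {x,y} are [seq bool], x = false, y = true).
   The free Lie algebra L(x,y) is realised, as usual, as the Lie subalgebra of
   this associative algebra (commutator bracket) generated by x and y. *)
Section FreeAlg.
Variable K : fieldType.

Definition word := seq bool.
Definition series := word -> K.

Definition lx : series := fun w => if w == [:: false] then 1 else 0.
Definition ly : series := fun w => if w == [:: true] then 1 else 0.

Definition sadd (f g : series) : series := fun w => f w + g w.
Definition sscale (c : K) (f : series) : series := fun w => c * f w.
Definition szero : series := fun _ => 0.
Definition smul (f g : series) : series :=
  fun w => \sum_(i < (size w).+1) f (take i w) * g (drop i w).
Definition lbr (f g : series) : series :=
  fun w => smul f g w - smul g f w.

Inductive lie_gen (S : series -> Prop) : series -> Prop :=
| lie_gen_in f : S f -> lie_gen S f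
| lie_gen_zero : lie_gen S szero
| lie_gen_add f g : lie_gen S f -> lie_gen S g -> lie_gen S (sadd f g)
| lie_gen_scale c f : lie_gen S f -> lie_gen S (sscale c f)
| lie_gen_br f g : lie_gen S f -> lie_gen S g -> lie_gen S (lbr f g).

Definition freeLie : series -> Prop := lie_gen (fun f => f = lx \/ f = ly).

(* The derivation delta with delta(x) = 0, delta(y) = x (extended to K<<x,y>>):
   the coefficient of w in delta f is the sum, over positions i of w carrying
   the letter x, of the coefficient in f of w with that letter replaced by y. *)
Definition delta (f : series) : series :=
  fun w => \sum_(i < size w | nth true w i == false) f (set_nth false w i true).

Definition deg_le (n : nat) (f : series) : Prop :=
  forall w : word, (n < size w)%N -> f w = 0.

End FreeAlg.

(* Main.v *)
Require Import Defs.
From mathcomp Require Import all_boot all_order all_algebra.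
From mathcomp Require Import ring.
From Stdlib Require Import FunctionalExtensionality.
Import GRing.Theory.
Local Open Scope ring_scope.

Inductive tr := Lx | Ly | Br of tr & tr.
Inductive ttr := TX | TU | TW | TB of ttr & ttr.

Fixpoint tdeg (t : tr) : nat :=
  match t with Lx | Ly => 1%N | Br a b => (tdeg a + tdeg b)%N end.

Fixpoint tr_of (t : ttr) : tr :=
  match t with
  | TX => Lx
  | TU => Br Ly Lx
  | TW => Br (Br (Br Ly Lx) Ly) (Br (Br Ly Lx) Lx)
  | TB a b => Br (tr_of a) (tr_of b)
  end.

Fixpoint hev (t : tr) (w : word) : int :=
  match t with
  | Lx => if w == [:: false] then 1 else 0
  | Ly => if w == [:: true] then 1 else 0
  | Br a b => if size w == (tdeg a + tdeg b)%N then
       hev a (take (tdeg a) w) * hev b (drop (tdeg a) w)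
       - hev b (take (tdeg b) w) * hev a (drop (tdeg b) w) else 0
  end.

Definition sumz (s : seq int) : int := foldr +%R 0 s.

Fixpoint words (n : nat) : seq word :=
  if n is n'.+1 then [seq b :: w | b <- [:: false; true], w <- words n'] else [:: [::]].
Definition words7 : seq word := flatten [seq words n | n <- iota 0 8].
Definition basis : seq tr := [:: Lx;
  Ly;
  (Br Lx Ly);
  (Br Lx (Br Lx Ly));
  (Br (Br Lx Ly) Ly);
  (Br Lx (Br Lx (Br Lx Ly)));
  (Br Lx (Br (Br Lx Ly) Ly));
  (Br (Br (Br Lx Ly) Ly) Ly);
  (Br Lx (Br Lx (Br Lx (Br Lx Ly))));
  (Br Lx (Br Lx (Br (Br Lx Ly) Ly)));
  (Br (Br Lx (Br Lx Ly)) (Br Lx Ly));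
  (Br Lx (Br (Br (Br Lx Ly) Ly) Ly));
  (Br (Br Lx Ly) (Br (Br Lx Ly) Ly));
  (Br (Br (Br (Br Lx Ly) Ly) Ly) Ly);
  (Br Lx (Br Lx (Br Lx (Br Lx (Br Lx Ly)))));
  (Br Lx (Br Lx (Br Lx (Br (Br Lx Ly) Ly))));
  (Br Lx (Br (Br Lx (Br Lx Ly)) (Br Lx Ly)));
  (Br Lx (Br Lx (Br (Br (Br Lx Ly) Ly) Ly)));
  (Br Lx (Br (Br Lx Ly) (Br (Br Lx Ly) Ly)));
  (Br (Br Lx (Br (Br Lx Ly) Ly)) (Br Lx Ly));
  (Br Lx (Br (Br (Br (Br Lx Ly) Ly) Ly) Ly));
  (Br (Br Lx Ly) (Br (Br (Br Lx Ly) Ly) Ly));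
  (Br (Br (Br (Br (Br Lx Ly) Ly) Ly) Ly) Ly);
  (Br Lx (Br Lx (Br Lx (Br Lx (Br Lx (Br Lx Ly))))));
  (Br Lx (Br Lx (Br Lx (Br Lx (Br (Br Lx Ly) Ly)))));
  (Br Lx (Br Lx (Br (Br Lx (Br Lx Ly)) (Br Lx Ly))));
  (Br Lx (Br Lx (Br Lx (Br (Br (Br Lx Ly) Ly) Ly))));
  (Br (Br Lx (Br Lx (Br Lx Ly))) (Br Lx (Br Lx Ly)));
  (Br Lx (Br Lx (Br (Br Lx Ly) (Br (Br Lx Ly) Ly))));
  (Br Lx (Br (Br Lx (Br (Br Lx Ly) Ly)) (Br Lx Ly)));
  (Br Lx (Br Lx (Br (Br (Br (Br Lx Ly) Ly) Ly) Ly)));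
  (Br (Br Lx (Br Lx Ly)) (Br Lx (Br (Br Lx Ly) Ly)));
  (Br (Br (Br Lx (Br Lx Ly)) (Br Lx Ly)) (Br Lx Ly));
  (Br Lx (Br (Br Lx Ly) (Br (Br (Br Lx Ly) Ly) Ly)));
  (Br (Br Lx (Br (Br Lx Ly) Ly)) (Br (Br Lx Ly) Ly));
  (Br (Br Lx (Br (Br (Br Lx Ly) Ly) Ly)) (Br Lx Ly));
  (Br Lx (Br (Br (Br (Br (Br Lx Ly) Ly) Ly) Ly) Ly));
  (Br (Br Lx Ly) (Br (Br Lx Ly) (Br (Br Lx Ly) Ly)));
  (Br (Br Lx Ly) (Br (Br (Br (Br Lx Ly) Ly) Ly) Ly));
  (Br (Br (Br Lx Ly) Ly) (Br (Br (Br Lx Ly) Ly) Ly));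
  (Br (Br (Br (Br (Br (Br Lx Ly) Ly) Ly) Ly) Ly) Ly)].
Definition sct : seq (seq (seq (nat * int))) := [::
  [:: [:: ]; [:: (2%N, 1)]; [:: (3%N, 1)]; [:: (5%N, 1)]; [:: (6%N, 1)]; [:: (8%N, 1)]; [:: (9%N, 1)]; [:: (11%N, 1)]; [:: (14%N, 1)]; [:: (15%N, 1)]; [:: (16%N, 1)]; [:: (17%N, 1)]; [:: (18%N, 1)]; [:: (20%N, 1)]; [:: (23%N, 1)]; [:: (24%N, 1)]; [:: (25%N, 1)]; [:: (26%N, 1)]; [:: (28%N, 1)]; [:: (29%N, 1)]; [:: (30%N, 1)]; [:: (33%N, 1)]; [:: (36%N, 1)]; [:: ]; [:: ]; [:: ]; [:: ]; [:: ]; [:: ]; [:: ]; [:: ]; [:: ]; [:: ]; [:: ]; [:: ]; [:: ]; [:: ]; [:: ]; [:: ]; [:: ]; [:: ]];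
  [:: [:: (2%N, (-1))]; [:: ]; [:: (4%N, (-1))]; [:: (6%N, (-1))]; [:: (7%N, (-1))]; [:: (9%N, (-1)); (10%N, 1)]; [:: (11%N, (-1)); (12%N, (-1))]; [:: (13%N, (-1))]; [:: (15%N, (-1)); (16%N, 2)]; [:: (17%N, (-1)); (18%N, (-1)); (19%N, 1)]; [:: (18%N, (-1)); (19%N, (-2))]; [:: (20%N, (-1)); (21%N, (-1))]; [:: (21%N, (-1))]; [:: (22%N, (-1))]; [:: (24%N, (-1)); (25%N, 3); (27%N, (-1))]; [:: (26%N, (-1)); (28%N, (-1)); (29%N, 2); (31%N, 1)]; [:: (28%N, (-1)); (29%N, (-2)); (32%N, 1)]; [:: (30%N, (-1)); (33%N, (-1)); (35%N, 1)]; [:: (33%N, (-1)); (37%N, (-1))]; [:: (34%N, (-1)); (35%N, (-1)); (37%N, 1)]; [:: (36%N, (-1)); (38%N, (-1))]; [:: (38%N, (-1)); (39%N, (-1))]; [:: (40%N, (-1))]; [:: ]; [:: ]; [:: ]; [:: ]; [:: ]; [:: ]; [:: ]; [:: ]; [:: ]; [:: ]; [:: ]; [:: ]; [:: ]; [:: ]; [:: ]; [:: ]; [:: ]; [:: ]];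
  [:: [:: (3%N, (-1))]; [:: (4%N, 1)]; [:: ]; [:: (10%N, (-1))]; [:: (12%N, 1)]; [:: (16%N, (-1))]; [:: (19%N, (-1))]; [:: (21%N, 1)]; [:: (25%N, (-1)); (27%N, 1)]; [:: (29%N, (-1)); (31%N, (-1))]; [:: (32%N, (-1))]; [:: (35%N, (-1))]; [:: (37%N, 1)]; [:: (38%N, 1)]; [:: ]; [:: ]; [:: ]; [:: ]; [:: ]; [:: ]; [:: ]; [:: ]; [:: ]; [:: ]; [:: ]; [:: ]; [:: ]; [:: ]; [:: ]; [:: ]; [:: ]; [:: ]; [:: ]; [:: ]; [:: ]; [:: ]; [:: ]; [:: ]; [:: ]; [:: ]; [:: ]];
  [:: [:: (5%N, (-1))]; [:: (6%N, 1)]; [:: (10%N, 1)]; [:: ]; [:: (18%N, 1); (19%N, 1)]; [:: (27%N, (-1))]; [:: (31%N, 1)]; [:: (33%N, 1); (35%N, 1)]; [:: ]; [:: ]; [:: ]; [:: ]; [:: ]; [:: ]; [:: ]; [:: ]; [:: ]; [:: ]; [:: ]; [:: ]; [:: ]; [:: ]; [:: ]; [:: ]; [:: ]; [:: ]; [:: ]; [:: ]; [:: ]; [:: ]; [:: ]; [:: ]; [:: ]; [:: ]; [:: ]; [:: ]; [:: ]; [:: ]; [:: ]; [:: ]; [:: ]];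
  [:: [:: (6%N, (-1))]; [:: (7%N, 1)]; [:: (12%N, (-1))]; [:: (18%N, (-1)); (19%N, (-1))]; [:: ]; [:: (28%N, (-1)); (29%N, (-1)); (31%N, 1)]; [:: (34%N, (-1))]; [:: (39%N, 1)]; [:: ]; [:: ]; [:: ]; [:: ]; [:: ]; [:: ]; [:: ]; [:: ]; [:: ]; [:: ]; [:: ]; [:: ]; [:: ]; [:: ]; [:: ]; [:: ]; [:: ]; [:: ]; [:: ]; [:: ]; [:: ]; [:: ]; [:: ]; [:: ]; [:: ]; [:: ]; [:: ]; [:: ]; [:: ]; [:: ]; [:: ]; [:: ]; [:: ]];
  [:: [:: (8%N, (-1))]; [:: (9%N, 1); (10%N, (-1))]; [:: (16%N, 1)]; [:: (27%N, 1)]; [:: (28%N, 1); (29%N, 1); (31%N, (-1))]; [:: ]; [:: ]; [:: ]; [:: ]; [:: ]; [:: ]; [:: ]; [:: ]; [:: ]; [:: ]; [:: ]; [:: ]; [:: ]; [:: ]; [:: ]; [:: ]; [:: ]; [:: ]; [:: ]; [:: ]; [:: ]; [:: ]; [:: ]; [:: ]; [:: ]; [:: ]; [:: ]; [:: ]; [:: ]; [:: ]; [:: ]; [:: ]; [:: ]; [:: ]; [:: ]; [:: ]];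
  [:: [:: (9%N, (-1))]; [:: (11%N, 1); (12%N, 1)]; [:: (19%N, 1)]; [:: (31%N, (-1))]; [:: (34%N, 1)]; [:: ]; [:: ]; [:: ]; [:: ]; [:: ]; [:: ]; [:: ]; [:: ]; [:: ]; [:: ]; [:: ]; [:: ]; [:: ]; [:: ]; [:: ]; [:: ]; [:: ]; [:: ]; [:: ]; [:: ]; [:: ]; [:: ]; [:: ]; [:: ]; [:: ]; [:: ]; [:: ]; [:: ]; [:: ]; [:: ]; [:: ]; [:: ]; [:: ]; [:: ]; [:: ]; [:: ]];
  [:: [:: (11%N, (-1))]; [:: (13%N, 1)]; [:: (21%N, (-1))]; [:: (33%N, (-1)); (35%N, (-1))]; [:: (39%N, (-1))]; [:: ]; [:: ]; [:: ]; [:: ]; [:: ]; [:: ]; [:: ]; [:: ]; [:: ]; [:: ]; [:: ]; [:: ]; [:: ]; [:: ]; [:: ]; [:: ]; [:: ]; [:: ]; [:: ]; [:: ]; [:: ]; [:: ]; [:: ]; [:: ]; [:: ]; [:: ]; [:: ]; [:: ]; [:: ]; [:: ]; [:: ]; [:: ]; [:: ]; [:: ]; [:: ]; [:: ]];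
  [:: [:: (14%N, (-1))]; [:: (15%N, 1); (16%N, (-2))]; [:: (25%N, 1); (27%N, (-1))]; [:: ]; [:: ]; [:: ]; [:: ]; [:: ]; [:: ]; [:: ]; [:: ]; [:: ]; [:: ]; [:: ]; [:: ]; [:: ]; [:: ]; [:: ]; [:: ]; [:: ]; [:: ]; [:: ]; [:: ]; [:: ]; [:: ]; [:: ]; [:: ]; [:: ]; [:: ]; [:: ]; [:: ]; [:: ]; [:: ]; [:: ]; [:: ]; [:: ]; [:: ]; [:: ]; [:: ]; [:: ]; [:: ]];
  [:: [:: (15%N, (-1))]; [:: (17%N, 1); (18%N, 1); (19%N, (-1))]; [:: (29%N, 1); (31%N, 1)]; [:: ]; [:: ]; [:: ]; [:: ]; [:: ]; [:: ]; [:: ]; [:: ]; [:: ]; [:: ]; [:: ]; [:: ]; [:: ]; [:: ]; [:: ]; [:: ]; [:: ]; [:: ]; [:: ]; [:: ]; [:: ]; [:: ]; [:: ]; [:: ]; [:: ]; [:: ]; [:: ]; [:: ]; [:: ]; [:: ]; [:: ]; [:: ]; [:: ]; [:: ]; [:: ]; [:: ]; [:: ]; [:: ]];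
  [:: [:: (16%N, (-1))]; [:: (18%N, 1); (19%N, 2)]; [:: (32%N, 1)]; [:: ]; [:: ]; [:: ]; [:: ]; [:: ]; [:: ]; [:: ]; [:: ]; [:: ]; [:: ]; [:: ]; [:: ]; [:: ]; [:: ]; [:: ]; [:: ]; [:: ]; [:: ]; [:: ]; [:: ]; [:: ]; [:: ]; [:: ]; [:: ]; [:: ]; [:: ]; [:: ]; [:: ]; [:: ]; [:: ]; [:: ]; [:: ]; [:: ]; [:: ]; [:: ]; [:: ]; [:: ]; [:: ]];
  [:: [:: (17%N, (-1))]; [:: (20%N, 1); (21%N, 1)]; [:: (35%N, 1)]; [:: ]; [:: ]; [:: ]; [:: ]; [:: ]; [:: ]; [:: ]; [:: ]; [:: ]; [:: ]; [:: ]; [:: ]; [:: ]; [:: ]; [:: ]; [:: ]; [:: ]; [:: ]; [:: ]; [:: ]; [:: ]; [:: ]; [:: ]; [:: ]; [:: ]; [:: ]; [:: ]; [:: ]; [:: ]; [:: ]; [:: ]; [:: ]; [:: ]; [:: ]; [:: ]; [:: ]; [:: ]; [:: ]];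
  [:: [:: (18%N, (-1))]; [:: (21%N, 1)]; [:: (37%N, (-1))]; [:: ]; [:: ]; [:: ]; [:: ]; [:: ]; [:: ]; [:: ]; [:: ]; [:: ]; [:: ]; [:: ]; [:: ]; [:: ]; [:: ]; [:: ]; [:: ]; [:: ]; [:: ]; [:: ]; [:: ]; [:: ]; [:: ]; [:: ]; [:: ]; [:: ]; [:: ]; [:: ]; [:: ]; [:: ]; [:: ]; [:: ]; [:: ]; [:: ]; [:: ]; [:: ]; [:: ]; [:: ]; [:: ]];
  [:: [:: (20%N, (-1))]; [:: (22%N, 1)]; [:: (38%N, (-1))]; [:: ]; [:: ]; [:: ]; [:: ]; [:: ]; [:: ]; [:: ]; [:: ]; [:: ]; [:: ]; [:: ]; [:: ]; [:: ]; [:: ]; [:: ]; [:: ]; [:: ]; [:: ]; [:: ]; [:: ]; [:: ]; [:: ]; [:: ]; [:: ]; [:: ]; [:: ]; [:: ]; [:: ]; [:: ]; [:: ]; [:: ]; [:: ]; [:: ]; [:: ]; [:: ]; [:: ]; [:: ]; [:: ]];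
  [:: [:: (23%N, (-1))]; [:: (24%N, 1); (25%N, (-3)); (27%N, 1)]; [:: ]; [:: ]; [:: ]; [:: ]; [:: ]; [:: ]; [:: ]; [:: ]; [:: ]; [:: ]; [:: ]; [:: ]; [:: ]; [:: ]; [:: ]; [:: ]; [:: ]; [:: ]; [:: ]; [:: ]; [:: ]; [:: ]; [:: ]; [:: ]; [:: ]; [:: ]; [:: ]; [:: ]; [:: ]; [:: ]; [:: ]; [:: ]; [:: ]; [:: ]; [:: ]; [:: ]; [:: ]; [:: ]; [:: ]];
  [:: [:: (24%N, (-1))]; [:: (26%N, 1); (28%N, 1); (29%N, (-2)); (31%N, (-1))]; [:: ]; [:: ]; [:: ]; [:: ]; [:: ]; [:: ]; [:: ]; [:: ]; [:: ]; [:: ]; [:: ]; [:: ]; [:: ]; [:: ]; [:: ]; [:: ]; [:: ]; [:: ]; [:: ]; [:: ]; [:: ]; [:: ]; [:: ]; [:: ]; [:: ]; [:: ]; [:: ]; [:: ]; [:: ]; [:: ]; [:: ]; [:: ]; [:: ]; [:: ]; [:: ]; [:: ]; [:: ]; [:: ]; [:: ]];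
  [:: [:: (25%N, (-1))]; [:: (28%N, 1); (29%N, 2); (32%N, (-1))]; [:: ]; [:: ]; [:: ]; [:: ]; [:: ]; [:: ]; [:: ]; [:: ]; [:: ]; [:: ]; [:: ]; [:: ]; [:: ]; [:: ]; [:: ]; [:: ]; [:: ]; [:: ]; [:: ]; [:: ]; [:: ]; [:: ]; [:: ]; [:: ]; [:: ]; [:: ]; [:: ]; [:: ]; [:: ]; [:: ]; [:: ]; [:: ]; [:: ]; [:: ]; [:: ]; [:: ]; [:: ]; [:: ]; [:: ]];
  [:: [:: (26%N, (-1))]; [:: (30%N, 1); (33%N, 1); (35%N, (-1))]; [:: ]; [:: ]; [:: ]; [:: ]; [:: ]; [:: ]; [:: ]; [:: ]; [:: ]; [:: ]; [:: ]; [:: ]; [:: ]; [:: ]; [:: ]; [:: ]; [:: ]; [:: ]; [:: ]; [:: ]; [:: ]; [:: ]; [:: ]; [:: ]; [:: ]; [:: ]; [:: ]; [:: ]; [:: ]; [:: ]; [:: ]; [:: ]; [:: ]; [:: ]; [:: ]; [:: ]; [:: ]; [:: ]; [:: ]];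
  [:: [:: (28%N, (-1))]; [:: (33%N, 1); (37%N, 1)]; [:: ]; [:: ]; [:: ]; [:: ]; [:: ]; [:: ]; [:: ]; [:: ]; [:: ]; [:: ]; [:: ]; [:: ]; [:: ]; [:: ]; [:: ]; [:: ]; [:: ]; [:: ]; [:: ]; [:: ]; [:: ]; [:: ]; [:: ]; [:: ]; [:: ]; [:: ]; [:: ]; [:: ]; [:: ]; [:: ]; [:: ]; [:: ]; [:: ]; [:: ]; [:: ]; [:: ]; [:: ]; [:: ]; [:: ]];
  [:: [:: (29%N, (-1))]; [:: (34%N, 1); (35%N, 1); (37%N, (-1))]; [:: ]; [:: ]; [:: ]; [:: ]; [:: ]; [:: ]; [:: ]; [:: ]; [:: ]; [:: ]; [:: ]; [:: ]; [:: ]; [:: ]; [:: ]; [:: ]; [:: ]; [:: ]; [:: ]; [:: ]; [:: ]; [:: ]; [:: ]; [:: ]; [:: ]; [:: ]; [:: ]; [:: ]; [:: ]; [:: ]; [:: ]; [:: ]; [:: ]; [:: ]; [:: ]; [:: ]; [:: ]; [:: ]; [:: ]];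
  [:: [:: (30%N, (-1))]; [:: (36%N, 1); (38%N, 1)]; [:: ]; [:: ]; [:: ]; [:: ]; [:: ]; [:: ]; [:: ]; [:: ]; [:: ]; [:: ]; [:: ]; [:: ]; [:: ]; [:: ]; [:: ]; [:: ]; [:: ]; [:: ]; [:: ]; [:: ]; [:: ]; [:: ]; [:: ]; [:: ]; [:: ]; [:: ]; [:: ]; [:: ]; [:: ]; [:: ]; [:: ]; [:: ]; [:: ]; [:: ]; [:: ]; [:: ]; [:: ]; [:: ]; [:: ]];
  [:: [:: (33%N, (-1))]; [:: (38%N, 1); (39%N, 1)]; [:: ]; [:: ]; [:: ]; [:: ]; [:: ]; [:: ]; [:: ]; [:: ]; [:: ]; [:: ]; [:: ]; [:: ]; [:: ]; [:: ]; [:: ]; [:: ]; [:: ]; [:: ]; [:: ]; [:: ]; [:: ]; [:: ]; [:: ]; [:: ]; [:: ]; [:: ]; [:: ]; [:: ]; [:: ]; [:: ]; [:: ]; [:: ]; [:: ]; [:: ]; [:: ]; [:: ]; [:: ]; [:: ]; [:: ]];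
  [:: [:: (36%N, (-1))]; [:: (40%N, 1)]; [:: ]; [:: ]; [:: ]; [:: ]; [:: ]; [:: ]; [:: ]; [:: ]; [:: ]; [:: ]; [:: ]; [:: ]; [:: ]; [:: ]; [:: ]; [:: ]; [:: ]; [:: ]; [:: ]; [:: ]; [:: ]; [:: ]; [:: ]; [:: ]; [:: ]; [:: ]; [:: ]; [:: ]; [:: ]; [:: ]; [:: ]; [:: ]; [:: ]; [:: ]; [:: ]; [:: ]; [:: ]; [:: ]; [:: ]];
  [:: [:: ]; [:: ]; [:: ]; [:: ]; [:: ]; [:: ]; [:: ]; [:: ]; [:: ]; [:: ]; [:: ]; [:: ]; [:: ]; [:: ]; [:: ]; [:: ]; [:: ]; [:: ]; [:: ]; [:: ]; [:: ]; [:: ]; [:: ]; [:: ]; [:: ]; [:: ]; [:: ]; [:: ]; [:: ]; [:: ]; [:: ]; [:: ]; [:: ]; [:: ]; [:: ]; [:: ]; [:: ]; [:: ]; [:: ]; [:: ]; [:: ]];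
  [:: [:: ]; [:: ]; [:: ]; [:: ]; [:: ]; [:: ]; [:: ]; [:: ]; [:: ]; [:: ]; [:: ]; [:: ]; [:: ]; [:: ]; [:: ]; [:: ]; [:: ]; [:: ]; [:: ]; [:: ]; [:: ]; [:: ]; [:: ]; [:: ]; [:: ]; [:: ]; [:: ]; [:: ]; [:: ]; [:: ]; [:: ]; [:: ]; [:: ]; [:: ]; [:: ]; [:: ]; [:: ]; [:: ]; [:: ]; [:: ]; [:: ]];
  [:: [:: ]; [:: ]; [:: ]; [:: ]; [:: ]; [:: ]; [:: ]; [:: ]; [:: ]; [:: ]; [:: ]; [:: ]; [:: ]; [:: ]; [:: ]; [:: ]; [:: ]; [:: ]; [:: ]; [:: ]; [:: ]; [:: ]; [:: ]; [:: ]; [:: ]; [:: ]; [:: ]; [:: ]; [:: ]; [:: ]; [:: ]; [:: ]; [:: ]; [:: ]; [:: ]; [:: ]; [:: ]; [:: ]; [:: ]; [:: ]; [:: ]];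
  [:: [:: ]; [:: ]; [:: ]; [:: ]; [:: ]; [:: ]; [:: ]; [:: ]; [:: ]; [:: ]; [:: ]; [:: ]; [:: ]; [:: ]; [:: ]; [:: ]; [:: ]; [:: ]; [:: ]; [:: ]; [:: ]; [:: ]; [:: ]; [:: ]; [:: ]; [:: ]; [:: ]; [:: ]; [:: ]; [:: ]; [:: ]; [:: ]; [:: ]; [:: ]; [:: ]; [:: ]; [:: ]; [:: ]; [:: ]; [:: ]; [:: ]];
  [:: [:: ]; [:: ]; [:: ]; [:: ]; [:: ]; [:: ]; [:: ]; [:: ]; [:: ]; [:: ]; [:: ]; [:: ]; [:: ]; [:: ]; [:: ]; [:: ]; [:: ]; [:: ]; [:: ]; [:: ]; [:: ]; [:: ]; [:: ]; [:: ]; [:: ]; [:: ]; [:: ]; [:: ]; [:: ]; [:: ]; [:: ]; [:: ]; [:: ]; [:: ]; [:: ]; [:: ]; [:: ]; [:: ]; [:: ]; [:: ]; [:: ]];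
  [:: [:: ]; [:: ]; [:: ]; [:: ]; [:: ]; [:: ]; [:: ]; [:: ]; [:: ]; [:: ]; [:: ]; [:: ]; [:: ]; [:: ]; [:: ]; [:: ]; [:: ]; [:: ]; [:: ]; [:: ]; [:: ]; [:: ]; [:: ]; [:: ]; [:: ]; [:: ]; [:: ]; [:: ]; [:: ]; [:: ]; [:: ]; [:: ]; [:: ]; [:: ]; [:: ]; [:: ]; [:: ]; [:: ]; [:: ]; [:: ]; [:: ]];
  [:: [:: ]; [:: ]; [:: ]; [:: ]; [:: ]; [:: ]; [:: ]; [:: ]; [:: ]; [:: ]; [:: ]; [:: ]; [:: ]; [:: ]; [:: ]; [:: ]; [:: ]; [:: ]; [:: ]; [:: ]; [:: ]; [:: ]; [:: ]; [:: ]; [:: ]; [:: ]; [:: ]; [:: ]; [:: ]; [:: ]; [:: ]; [:: ]; [:: ]; [:: ]; [:: ]; [:: ]; [:: ]; [:: ]; [:: ]; [:: ]; [:: ]];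
  [:: [:: ]; [:: ]; [:: ]; [:: ]; [:: ]; [:: ]; [:: ]; [:: ]; [:: ]; [:: ]; [:: ]; [:: ]; [:: ]; [:: ]; [:: ]; [:: ]; [:: ]; [:: ]; [:: ]; [:: ]; [:: ]; [:: ]; [:: ]; [:: ]; [:: ]; [:: ]; [:: ]; [:: ]; [:: ]; [:: ]; [:: ]; [:: ]; [:: ]; [:: ]; [:: ]; [:: ]; [:: ]; [:: ]; [:: ]; [:: ]; [:: ]];
  [:: [:: ]; [:: ]; [:: ]; [:: ]; [:: ]; [:: ]; [:: ]; [:: ]; [:: ]; [:: ]; [:: ]; [:: ]; [:: ]; [:: ]; [:: ]; [:: ]; [:: ]; [:: ]; [:: ]; [:: ]; [:: ]; [:: ]; [:: ]; [:: ]; [:: ]; [:: ]; [:: ]; [:: ]; [:: ]; [:: ]; [:: ]; [:: ]; [:: ]; [:: ]; [:: ]; [:: ]; [:: ]; [:: ]; [:: ]; [:: ]; [:: ]];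
  [:: [:: ]; [:: ]; [:: ]; [:: ]; [:: ]; [:: ]; [:: ]; [:: ]; [:: ]; [:: ]; [:: ]; [:: ]; [:: ]; [:: ]; [:: ]; [:: ]; [:: ]; [:: ]; [:: ]; [:: ]; [:: ]; [:: ]; [:: ]; [:: ]; [:: ]; [:: ]; [:: ]; [:: ]; [:: ]; [:: ]; [:: ]; [:: ]; [:: ]; [:: ]; [:: ]; [:: ]; [:: ]; [:: ]; [:: ]; [:: ]; [:: ]];
  [:: [:: ]; [:: ]; [:: ]; [:: ]; [:: ]; [:: ]; [:: ]; [:: ]; [:: ]; [:: ]; [:: ]; [:: ]; [:: ]; [:: ]; [:: ]; [:: ]; [:: ]; [:: ]; [:: ]; [:: ]; [:: ]; [:: ]; [:: ]; [:: ]; [:: ]; [:: ]; [:: ]; [:: ]; [:: ]; [:: ]; [:: ]; [:: ]; [:: ]; [:: ]; [:: ]; [:: ]; [:: ]; [:: ]; [:: ]; [:: ]; [:: ]];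
  [:: [:: ]; [:: ]; [:: ]; [:: ]; [:: ]; [:: ]; [:: ]; [:: ]; [:: ]; [:: ]; [:: ]; [:: ]; [:: ]; [:: ]; [:: ]; [:: ]; [:: ]; [:: ]; [:: ]; [:: ]; [:: ]; [:: ]; [:: ]; [:: ]; [:: ]; [:: ]; [:: ]; [:: ]; [:: ]; [:: ]; [:: ]; [:: ]; [:: ]; [:: ]; [:: ]; [:: ]; [:: ]; [:: ]; [:: ]; [:: ]; [:: ]];
  [:: [:: ]; [:: ]; [:: ]; [:: ]; [:: ]; [:: ]; [:: ]; [:: ]; [:: ]; [:: ]; [:: ]; [:: ]; [:: ]; [:: ]; [:: ]; [:: ]; [:: ]; [:: ]; [:: ]; [:: ]; [:: ]; [:: ]; [:: ]; [:: ]; [:: ]; [:: ]; [:: ]; [:: ]; [:: ]; [:: ]; [:: ]; [:: ]; [:: ]; [:: ]; [:: ]; [:: ]; [:: ]; [:: ]; [:: ]; [:: ]; [:: ]];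
  [:: [:: ]; [:: ]; [:: ]; [:: ]; [:: ]; [:: ]; [:: ]; [:: ]; [:: ]; [:: ]; [:: ]; [:: ]; [:: ]; [:: ]; [:: ]; [:: ]; [:: ]; [:: ]; [:: ]; [:: ]; [:: ]; [:: ]; [:: ]; [:: ]; [:: ]; [:: ]; [:: ]; [:: ]; [:: ]; [:: ]; [:: ]; [:: ]; [:: ]; [:: ]; [:: ]; [:: ]; [:: ]; [:: ]; [:: ]; [:: ]; [:: ]];
  [:: [:: ]; [:: ]; [:: ]; [:: ]; [:: ]; [:: ]; [:: ]; [:: ]; [:: ]; [:: ]; [:: ]; [:: ]; [:: ]; [:: ]; [:: ]; [:: ]; [:: ]; [:: ]; [:: ]; [:: ]; [:: ]; [:: ]; [:: ]; [:: ]; [:: ]; [:: ]; [:: ]; [:: ]; [:: ]; [:: ]; [:: ]; [:: ]; [:: ]; [:: ]; [:: ]; [:: ]; [:: ]; [:: ]; [:: ]; [:: ]; [:: ]];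
  [:: [:: ]; [:: ]; [:: ]; [:: ]; [:: ]; [:: ]; [:: ]; [:: ]; [:: ]; [:: ]; [:: ]; [:: ]; [:: ]; [:: ]; [:: ]; [:: ]; [:: ]; [:: ]; [:: ]; [:: ]; [:: ]; [:: ]; [:: ]; [:: ]; [:: ]; [:: ]; [:: ]; [:: ]; [:: ]; [:: ]; [:: ]; [:: ]; [:: ]; [:: ]; [:: ]; [:: ]; [:: ]; [:: ]; [:: ]; [:: ]; [:: ]];
  [:: [:: ]; [:: ]; [:: ]; [:: ]; [:: ]; [:: ]; [:: ]; [:: ]; [:: ]; [:: ]; [:: ]; [:: ]; [:: ]; [:: ]; [:: ]; [:: ]; [:: ]; [:: ]; [:: ]; [:: ]; [:: ]; [:: ]; [:: ]; [:: ]; [:: ]; [:: ]; [:: ]; [:: ]; [:: ]; [:: ]; [:: ]; [:: ]; [:: ]; [:: ]; [:: ]; [:: ]; [:: ]; [:: ]; [:: ]; [:: ]; [:: ]];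
  [:: [:: ]; [:: ]; [:: ]; [:: ]; [:: ]; [:: ]; [:: ]; [:: ]; [:: ]; [:: ]; [:: ]; [:: ]; [:: ]; [:: ]; [:: ]; [:: ]; [:: ]; [:: ]; [:: ]; [:: ]; [:: ]; [:: ]; [:: ]; [:: ]; [:: ]; [:: ]; [:: ]; [:: ]; [:: ]; [:: ]; [:: ]; [:: ]; [:: ]; [:: ]; [:: ]; [:: ]; [:: ]; [:: ]; [:: ]; [:: ]; [:: ]]].
Definition targs : seq ttr := [:: TX;
  TU;
  (TB TX TU);
  (TB TX (TB TX TU));
  (TB TX (TB TX (TB TX TU)));
  (TB TU (TB TX TU));
  TW;
  (TB TX (TB TX (TB TX (TB TX TU))));
  (TB TX (TB TU (TB TX TU)));
  (TB TX TW);
  (TB TX (TB TX (TB TX (TB TX (TB TX TU)))));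
  (TB TX (TB TX (TB TU (TB TX TU))));
  (TB TU (TB TX (TB TX (TB TX TU))));
  (TB TU (TB TU (TB TX TU)))].
Definition taut : seq (seq int) := [::
  [:: 1; 0; 0; 0; 0; 0; 0; 0; 0; 0; 0; 0; 0; 0; 0; 0; 0; 0; 0; 0; 0; 0; 0; 0; 0; 0; 0; 0; 0; 0; 0; 0; 0; 0; 0; 0; 0; 0; 0; 0; 0];
  [:: 0; 0; (-1); 0; 0; 0; 0; 0; 0; 0; 0; 0; 0; 0; 0; 0; 0; 0; 0; 0; 0; 0; 0; 0; 0; 0; 0; 0; 0; 0; 0; 0; 0; 0; 0; 0; 0; 0; 0; 0; 0];
  [:: 0; 0; 0; (-1); 0; 0; 0; 0; 0; 0; 0; 0; 0; 0; 0; 0; 0; 0; 0; 0; 0; 0; 0; 0; 0; 0; 0; 0; 0; 0; 0; 0; 0; 0; 0; 0; 0; 0; 0; 0; 0];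
  [:: 0; 0; 0; 0; 0; (-1); 0; 0; 0; 0; 0; 0; 0; 0; 0; 0; 0; 0; 0; 0; 0; 0; 0; 0; 0; 0; 0; 0; 0; 0; 0; 0; 0; 0; 0; 0; 0; 0; 0; 0; 0];
  [:: 0; 0; 0; 0; 0; 0; 0; 0; (-1); 0; 0; 0; 0; 0; 0; 0; 0; 0; 0; 0; 0; 0; 0; 0; 0; 0; 0; 0; 0; 0; 0; 0; 0; 0; 0; 0; 0; 0; 0; 0; 0];
  [:: 0; 0; 0; 0; 0; 0; 0; 0; 0; 0; (-1); 0; 0; 0; 0; 0; 0; 0; 0; 0; 0; 0; 0; 0; 0; 0; 0; 0; 0; 0; 0; 0; 0; 0; 0; 0; 0; 0; 0; 0; 0];
  [:: 0; 0; 0; 0; 0; 0; 0; 0; 0; 0; 0; 0; 0; 0; 0; 0; 0; 0; 1; 1; 0; 0; 0; 0; 0; 0; 0; 0; 0; 0; 0; 0; 0; 0; 0; 0; 0; 0; 0; 0; 0];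
  [:: 0; 0; 0; 0; 0; 0; 0; 0; 0; 0; 0; 0; 0; 0; (-1); 0; 0; 0; 0; 0; 0; 0; 0; 0; 0; 0; 0; 0; 0; 0; 0; 0; 0; 0; 0; 0; 0; 0; 0; 0; 0];
  [:: 0; 0; 0; 0; 0; 0; 0; 0; 0; 0; 0; 0; 0; 0; 0; 0; (-1); 0; 0; 0; 0; 0; 0; 0; 0; 0; 0; 0; 0; 0; 0; 0; 0; 0; 0; 0; 0; 0; 0; 0; 0];
  [:: 0; 0; 0; 0; 0; 0; 0; 0; 0; 0; 0; 0; 0; 0; 0; 0; 0; 0; 0; 0; 0; 0; 0; 0; 0; 0; 0; 0; 1; 1; 0; 0; 0; 0; 0; 0; 0; 0; 0; 0; 0];
  [:: 0; 0; 0; 0; 0; 0; 0; 0; 0; 0; 0; 0; 0; 0; 0; 0; 0; 0; 0; 0; 0; 0; 0; (-1); 0; 0; 0; 0; 0; 0; 0; 0; 0; 0; 0; 0; 0; 0; 0; 0; 0];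
  [:: 0; 0; 0; 0; 0; 0; 0; 0; 0; 0; 0; 0; 0; 0; 0; 0; 0; 0; 0; 0; 0; 0; 0; 0; 0; (-1); 0; 0; 0; 0; 0; 0; 0; 0; 0; 0; 0; 0; 0; 0; 0];
  [:: 0; 0; 0; 0; 0; 0; 0; 0; 0; 0; 0; 0; 0; 0; 0; 0; 0; 0; 0; 0; 0; 0; 0; 0; 0; (-1); 0; 1; 0; 0; 0; 0; 0; 0; 0; 0; 0; 0; 0; 0; 0];
  [:: 0; 0; 0; 0; 0; 0; 0; 0; 0; 0; 0; 0; 0; 0; 0; 0; 0; 0; 0; 0; 0; 0; 0; 0; 0; 0; 0; 0; 0; 0; 0; 0; (-1); 0; 0; 0; 0; 0; 0; 0; 0]].
Definition Et : seq (seq int) := [::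
  [:: 60; 0; 0; 0; 0; 0; 0; 0; 0; 0; 0; 0; 0; 0; 0; 0; 0; 0; 0; 0; 0; 0; 0; 0; 0; 0; 0; 0; 0; 0; 0; 0; 0; 0; 0; 0; 0; 0; 0; 0; 0];
  [:: 0; 0; (-60); 0; 0; 0; 0; 0; 0; 0; 0; 0; 0; 0; 0; 0; 0; 0; 0; 0; 0; 0; 0; 0; 0; 0; 0; 0; 0; 0; 0; 0; 0; 0; 0; 0; 0; 0; 0; 0; 0];
  [:: 0; 0; 0; (-60); 0; 0; 0; 0; 0; 0; 0; 0; 0; 0; 0; 0; 0; 0; 0; 0; 0; 0; 0; 0; 0; 0; 0; 0; 0; 0; 0; 0; 0; 0; 0; 0; 0; 0; 0; 0; 0];
  [:: 0; 0; 0; 0; 0; (-60); 0; 0; 0; 0; 0; 0; 0; 0; 0; 0; 0; 0; 0; 0; 0; 0; 0; 0; 0; 0; 0; 0; 0; 0; 0; 0; 0; 0; 0; 0; 0; 0; 0; 0; 0];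
  [:: 0; 0; 0; 0; 0; 0; 0; 0; (-60); 0; 0; 0; 0; 0; 0; 0; 0; 0; 0; 0; 0; 0; 0; 0; 0; 0; 0; 0; 0; 0; 0; 0; 0; 0; 0; 0; 0; 0; 0; 0; 0];
  [:: 0; 0; 0; 0; 0; 0; 0; 0; 0; 0; (-60); 0; 0; 0; 0; 0; 0; 0; 0; 0; 0; 0; 0; 0; 0; 0; 0; 0; 0; 0; 0; 0; 0; 0; 0; 0; 0; 0; 0; 0; 0];
  [:: 0; 0; 0; 0; 0; 0; 0; 0; 0; 0; 0; 0; 0; 0; 0; 0; 0; 0; 60; 0; 0; 0; 0; 0; 0; 0; 0; 0; 0; 0; 0; 0; 0; 0; 0; 0; 0; 0; 0; 0; 0];
  [:: 0; 0; 0; 0; 0; 0; 0; 0; 0; 0; 0; 0; 0; 0; (-60); 0; 0; 0; 0; 0; 0; 0; 0; 0; 0; 0; 0; 0; 0; 0; 0; 0; 0; 0; 0; 0; 0; 0; 0; 0; 0];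
  [:: 0; 0; 0; 0; 0; 0; 0; 0; 0; 0; 0; 0; 0; 0; 0; 0; (-60); 0; 0; 0; 0; 0; 0; 0; 0; 0; 0; 0; 0; 0; 0; 0; 0; 0; 0; 0; 0; 0; 0; 0; 0];
  [:: 0; 0; 0; 0; 0; 0; 0; 0; 0; 0; 0; 0; 0; 0; 0; 0; 0; 0; 0; 0; 0; 0; 0; 0; 0; 0; 0; 0; 60; 0; 0; 0; 0; 0; 0; 0; 0; 0; 0; 0; 0];
  [:: 0; 0; 0; 0; 0; 0; 0; 0; 0; 0; 0; 0; 0; 0; 0; 0; 0; 0; 0; 0; 0; 0; 0; (-60); 0; 0; 0; 0; 0; 0; 0; 0; 0; 0; 0; 0; 0; 0; 0; 0; 0];
  [:: 0; 0; 0; 0; 0; 0; 0; 0; 0; 0; 0; 0; 0; 0; 0; 0; 0; 0; 0; 0; 0; 0; 0; 0; 0; (-60); 0; (-60); 0; 0; 0; 0; 0; 0; 0; 0; 0; 0; 0; 0; 0];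
  [:: 0; 0; 0; 0; 0; 0; 0; 0; 0; 0; 0; 0; 0; 0; 0; 0; 0; 0; 0; 0; 0; 0; 0; 0; 0; 0; 0; 60; 0; 0; 0; 0; 0; 0; 0; 0; 0; 0; 0; 0; 0];
  [:: 0; 0; 0; 0; 0; 0; 0; 0; 0; 0; 0; 0; 0; 0; 0; 0; 0; 0; 0; 0; 0; 0; 0; 0; 0; 0; 0; 0; 0; 0; 0; 0; (-60); 0; 0; 0; 0; 0; 0; 0; 0]].
Definition Yt : seq (seq (word * int)) := [::
  [:: ];
  [:: ([:: false], 60)];
  [:: ];
  [:: ];
  [:: ([:: false; false; true], (-60))];
  [:: ];
  [:: ([:: false; false; false; true], (-60))];
  [:: ([:: false; false; true; true], (-30))];
  [:: ];
  [:: ([:: false; false; false; false; true], (-60))];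
  [:: ];
  [:: ([:: false; false; false; true; true], (-30))];
  [:: ([:: false; false; false; true; true], 120); ([:: false; false; true; false; true], 60)];
  [:: ([:: false; false; true; true; true], (-20))];
  [:: ];
  [:: ([:: false; false; false; false; false; true], (-60))];
  [:: ];
  [:: ([:: false; false; false; false; true; true], (-30))];
  [:: ];
  [:: ([:: false; false; false; false; true; true], (-120)); ([:: false; false; false; true; false; true], (-60))];
  [:: ([:: false; false; false; true; true; true], (-20))];
  [:: ([:: false; false; false; true; true; true], (-30)); ([:: false; false; true; true; false; true], 30)];
  [:: ([:: false; false; true; true; true; true], (-15))];
  [:: ];
  [:: ([:: false; false; false; false; false; false; true], (-60))];
  [:: ];
  [:: ([:: false; false; false; false; false; true; true], (-30))];
  [:: ];
  [:: ];
  [:: ([:: false; false; false; false; false; true; true], (-120)); ([:: false; false; false; false; true; false; true], (-60))];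
  [:: ([:: false; false; false; false; true; true; true], (-20))];
  [:: ([:: false; false; false; false; false; true; true], 360); ([:: false; false; false; false; true; false; true], 180); ([:: false; false; false; true; false; false; true], 60)];
  [:: ];
  [:: ([:: false; false; false; false; true; true; true], (-300)); ([:: false; false; false; true; false; true; true], (-120)); ([:: false; false; true; false; false; true; true], (-30))];
  [:: ([:: false; false; false; false; true; true; true], (-140)); ([:: false; false; false; true; false; true; true], (-60))];
  [:: ([:: false; false; false; false; true; true; true], (-410)); ([:: false; false; false; true; false; true; true], (-180)); ([:: false; false; false; true; true; false; true], (-30)); ([:: false; false; true; false; false; true; true], (-30))];
  [:: ([:: false; false; false; true; true; true; true], (-15))];
  [:: ([:: false; false; false; false; true; true; true], (-360)); ([:: false; false; false; true; false; true; true], (-240)); ([:: false; false; false; true; true; false; true], (-120)); ([:: false; false; true; false; false; true; true], (-120)); ([:: false; false; true; false; true; false; true], (-60))];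
  [:: ([:: false; false; false; true; true; true; true], (-355)); ([:: false; false; true; false; true; true; true], (-140)); ([:: false; false; true; true; true; false; true], 20)];
  [:: ([:: false; false; false; true; true; true; true], (-165)); ([:: false; false; true; false; true; true; true], (-60))];
  [:: ([:: false; false; true; true; true; true; true], (-12))]].
Definition Dz : int := 60.
Definition Nb : nat := 41.
Definition Nt : nat := 14.
Definition bi (k : nat) : tr := nth Lx basis k.
Definition sc (i j : nat) : seq (nat * int) := nth [::] (nth [::] sct i) j.
Definition tt (m : nat) : tr := tr_of (nth TX targs m).
Definition tau (m i : nat) : int := nth 0 (nth [::] taut m) i.
Definition Em (m k : nat) : int := nth 0 (nth [::] Et m) k.
Definition Yi (i : nat) : seq (word * int) := nth [::] Yt i.
Definition dz (k : nat) (w : word) : int :=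
  sumz [seq hev (bi k) (set_nth false w p true) | p <- iota 0 (size w) & nth true w p == false].

Definition C1 : bool :=
  all (fun i => all (fun j => all (fun p => (p.1 < Nb)%N) (sc i j) &&
     all (fun w => hev (Br (bi i) (bi j)) w == sumz [seq p.2 * hev (bi p.1) w | p <- sc i j]) words7)
   (iota 0 Nb)) (iota 0 Nb).
Definition C2 : bool :=
  all (fun m => (tdeg (tt m) <= 7)%N &&
     all (fun w => hev (tt m) w == sumz [seq tau m i * hev (bi i) w | i <- iota 0 Nb]) words7)
   (iota 0 Nt).
Definition C3 : bool :=
  all (fun k => all (fun i => all (fun p => (size p.1 <= 7)%N) (Yi i) &&
     ((if i == k then Dz else 0) == sumz [seq Em m k * tau m i | m <- iota 0 Nt]
          + sumz [seq p.2 * dz k p.1 | p <- Yi i])) (iota 0 Nb)) (iota 0 Nb).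

Lemma in_iota0 {i n} : (i < n)%N -> i \in iota 0 n.
Proof. by move=> H; rewrite mem_iota add0n. Qed.

Lemma words_mem w : w \in words (size w).
Proof.
elim: w => [|b w IH] //=.
by case: b; rewrite !mem_cat (map_f _ IH) ?orbT.
Qed.

Lemma words7_mem {w} : (size w <= 7)%N -> w \in words7.
Proof.
move=> H; apply/flattenP; exists (words (size w)); last exact: words_mem.
by apply/mapP; exists (size w) => //; rewrite mem_iota add0n ltnS.
Qed.

Lemma C1ok : C1. Proof. vm_compute. reflexivity. Qed.
Lemma C2ok : C2. Proof. vm_compute. reflexivity. Qed.
Lemma C3ok : C3. Proof. vm_compute. reflexivity. Qed.

Lemma C1_idx {i j} : (i < Nb)%N -> (j < Nb)%N -> all (fun p => (p.1 < Nb)%N) (sc i j).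
Proof.
move=> Hi Hj; have := C1ok; move/allP/(_ i (in_iota0 Hi))/allP/(_ j (in_iota0 Hj)).
by case/andP.
Qed.

Lemma C1_eq {i j w} : (i < Nb)%N -> (j < Nb)%N -> (size w <= 7)%N ->
  hev (Br (bi i) (bi j)) w = sumz [seq p.2 * hev (bi p.1) w | p <- sc i j].
Proof.
move=> Hi Hj Hw; have := C1ok; move/allP/(_ i (in_iota0 Hi))/allP/(_ j (in_iota0 Hj)).
by case/andP => _ /allP /(_ w (words7_mem Hw)) /eqP.
Qed.

Lemma C2_deg {m} : (m < Nt)%N -> (tdeg (tt m) <= 7)%N.
Proof. by move=> Hm; have := C2ok; move/allP/(_ m (in_iota0 Hm)); case/andP. Qed.

Lemma C2_eq {m w} : (m < Nt)%N -> (size w <= 7)%N ->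
  hev (tt m) w = sumz [seq tau m i * hev (bi i) w | i <- iota 0 Nb].
Proof.
move=> Hm Hw; have := C2ok; move/allP/(_ m (in_iota0 Hm)).
by case/andP => _ /allP /(_ w (words7_mem Hw)) /eqP.
Qed.

Lemma C3_size {k i} : (k < Nb)%N -> (i < Nb)%N -> all (fun p => (size p.1 <= 7)%N) (Yi i).
Proof.
move=> Hk Hi; have := C3ok; move/allP/(_ k (in_iota0 Hk))/allP/(_ i (in_iota0 Hi)).
by case/andP.
Qed.

Lemma C3_eq {k i} : (k < Nb)%N -> (i < Nb)%N ->
  (if i == k then Dz else 0) = sumz [seq Em m k * tau m i | m <- iota 0 Nt]
          + sumz [seq p.2 * dz k p.1 | p <- Yi i].
Proof.
move=> Hk Hi; have := C3ok; move/allP/(_ k (in_iota0 Hk))/allP/(_ i (in_iota0 Hi)).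
by case/andP => _ /eqP.
Qed.

Lemma sumz_big (I : Type) (s : seq I) (F : I -> int) :
  sumz [seq F x | x <- s] = \sum_(x <- s) F x.
Proof. by elim: s => [|x s IH] /=; rewrite ?big_nil ?big_cons ?IH. Qed.

Section Proofs.
Variable K : fieldType.
Local Notation ser := (series K).

Lemma intr_big (I : Type) (s : seq I) (F : I -> int) :
  (\sum_(x <- s) F x)%:~R = \sum_(x <- s) (F x)%:~R :> K.
Proof. by elim: s => [|x s IH]; rewrite ?big_nil ?big_cons ?intrD ?IH. Qed.

Fixpoint ev (t : tr) : ser :=
  match t with Lx => lx K | Ly => ly K | Br a b => lbr (ev a) (ev b) end.

Definition hom (n : nat) (f : ser) := forall w : word, size w != n -> f w = 0.

Lemma smul_hom {a b f g} : hom a f -> hom b g -> forall w,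
  smul f g w = if size w == (a + b)%N then f (take a w) * g (drop a w) else 0.
Proof.
move=> Hf Hg w; rewrite /smul.
have Hsz i : (size (take i w) + size (drop i w))%N = size w
  by rewrite -size_cat cat_take_drop.
case: eqP => Hs.
- have Ha : (a < (size w).+1)%N by rewrite Hs ltnS leq_addr.
  rewrite (bigD1 (Ordinal Ha)) //= big1 ?addr0 // => i /eqP Hi.
  have Hti : size (take i w) = i by rewrite size_takel // -ltnS.
  have Hne : size (take i w) != a.
    by rewrite Hti; apply/eqP => Hia; apply: Hi; exact: val_inj.
  by rewrite (Hf _ Hne) mul0r.
- rewrite big1 // => i _.
  case: (eqVneq (size (take i w)) a) => [Ha|Ha]; last by rewrite (Hf _ Ha) mul0r.
  case: (eqVneq (size (drop i w)) b) => [Hb|Hb]; last by rewrite (Hg _ Hb) mulr0.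
  by exfalso; apply: Hs; rewrite -(Hsz i) Ha Hb.
Qed.

Lemma ev_hom t : hom (tdeg t) (ev t).
Proof.
elim: t => [||a IHa b IHb] w /= Hw.
- by rewrite /lx; case: eqP => // Hw'; rewrite Hw' in Hw.
- by rewrite /ly; case: eqP => // Hw'; rewrite Hw' in Hw.
- rewrite /lbr (smul_hom IHa IHb) (smul_hom IHb IHa) [(tdeg b + _)%N]addnC.
  by rewrite (negbTE Hw) subrr.
Qed.

Lemma ev_hev t w : ev t w = (hev t w)%:~R.
Proof.
elim: t w => [||a IHa b IHb] w /=.
- by rewrite /lx; case: (w == _).
- by rewrite /ly; case: (w == _).
- rewrite /lbr (smul_hom (ev_hom a) (ev_hom b)) (smul_hom (ev_hom b) (ev_hom a)).
  rewrite [(tdeg b + _)%N]addnC.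
  case: (size w == _); last by rewrite subrr.
  by rewrite !IHa !IHb intrB !intrM.
Qed.


Definition spanL (f : ser) := exists l : seq (K * nat),
  all (fun p => (p.2 < Nb)%N) l /\
  forall w, (size w <= 7)%N -> f w = \sum_(p <- l) p.1 * ev (bi p.2) w.

Lemma smul_expand {f g : ser} {l1 l2 : seq (K * nat)} {w} :
 (forall u, (size u <= size w)%N -> f u = \sum_(p <- l1) p.1 * ev (bi p.2) u) ->
 (forall u, (size u <= size w)%N -> g u = \sum_(p <- l2) p.1 * ev (bi p.2) u) ->
 smul f g w = \sum_(p <- l1) \sum_(q <- l2) p.1 * q.1 * smul (ev (bi p.2)) (ev (bi q.2)) w.
Proof.
move=> Hf Hg; rewrite /smul.
have Ht i : (size (take i w) <= size w)%N by rewrite size_take_min geq_minr.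
have Hd i : (size (drop i w) <= size w)%N by rewrite size_drop leq_subr.
under eq_bigr => i _ do rewrite (Hf _ (Ht i)) (Hg _ (Hd i)) big_distrlr /=.
rewrite exchange_big /=; apply: eq_bigr => p _.
rewrite exchange_big /=; apply: eq_bigr => q _.
rewrite mulr_sumr; apply: eq_bigr => i _.
by rewrite mulrACA.
Qed.

Lemma lbr_expand {f g : ser} {l1 l2 : seq (K * nat)} {w} :
 (forall u, (size u <= size w)%N -> f u = \sum_(p <- l1) p.1 * ev (bi p.2) u) ->
 (forall u, (size u <= size w)%N -> g u = \sum_(p <- l2) p.1 * ev (bi p.2) u) ->
 lbr f g w = \sum_(p <- l1) \sum_(q <- l2) p.1 * q.1 * lbr (ev (bi p.2)) (ev (bi q.2)) w.
Proof.
move=> Hf Hg; rewrite /lbr (smul_expand Hf Hg) (smul_expand Hg Hf).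
rewrite [X in _ - X]exchange_big /= -sumrB; apply: eq_bigr => p _.
rewrite -sumrB; apply: eq_bigr => q _.
by rewrite mulrBr [q.1 * p.1]mulrC.
Qed.

Lemma span_lie f : freeLie f -> spanL f.
Proof.
rewrite /freeLie => Hf; induction Hf as [f [->| ->]| |f g _ [l1 [Hl1 H1]] _ [l2 [Hl2 H2]]
   |c f _ [l [Hl H]]|f g _ [l1 [Hl1 H1]] _ [l2 [Hl2 H2]]].
- by exists [:: (1, 0%N)]; split => // w _; rewrite big_seq1 mul1r.
- by exists [:: (1, 1%N)]; split => // w _; rewrite big_seq1 mul1r.
- by exists [::]; split => // w _; rewrite big_nil.
- exists (l1 ++ l2); split; first by rewrite all_cat Hl1 Hl2.
  by move=> w Hw; rewrite /sadd big_cat -H1 // -H2.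
- exists [seq (c * p.1, p.2) | p <- l]; split; first by rewrite all_map.
  move=> w Hw; rewrite /sscale big_map H // mulr_sumr; apply: eq_bigr => p _.
  by rewrite mulrA.
- exists (flatten [seq flatten [seq [seq (p.1 * q.1 * (s.2)%:~R, s.1) | s <- sc p.2 q.2]
           | q <- l2] | p <- l1]); split.
    apply/allP => x /flattenP [s1 /mapP [p Hp ->]] /flattenP [s2 /mapP [q Hq ->]].
    move=> /mapP [s Hs ->] /=.
    have Hp2 : (p.2 < Nb)%N by exact: (allP Hl1 _ Hp).
    have Hq2 : (q.2 < Nb)%N by exact: (allP Hl2 _ Hq).
    by have := allP (C1_idx Hp2 Hq2) _ Hs.
  move=> w Hw.
  rewrite (@lbr_expand f g l1 l2 w) => [|u Hu|u Hu]; last first.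
  + by apply: H2; apply: leq_trans Hw.
  + by apply: H1; apply: leq_trans Hw.
  rewrite big_flatten big_map; apply: eq_big_seq => p Hp.
  rewrite big_flatten big_map; apply: eq_big_seq => q Hq.
  have Hp2 : (p.2 < Nb)%N by exact: (allP Hl1 _ Hp).
  have Hq2 : (q.2 < Nb)%N by exact: (allP Hl2 _ Hq).
  rewrite big_map.
  change (lbr (ev (bi p.2)) (ev (bi q.2)) w) with (ev (Br (bi p.2) (bi q.2)) w).
  rewrite ev_hev (C1_eq Hp2 Hq2 Hw) sumz_big intr_big mulr_sumr.
  apply: eq_bigr => s _.
  by rewrite intrM -ev_hev mulrA.
Qed.

Lemma sz_set {w : word} (i : 'I_(size w)) : size (set_nth false w i true) = size w.
Proof. by rewrite size_set_nth; apply/maxn_idPr; exact: ltn_ord. Qed.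

Lemma delta_expand f (l : seq (K * nat)) w :
  (forall u, size u = size w -> f u = \sum_(p <- l) p.1 * ev (bi p.2) u) ->
  delta f w = \sum_(p <- l) p.1 * (dz p.2 w)%:~R.
Proof.
move=> Hf; rewrite /delta.
under eq_bigr => i _ do rewrite (Hf _ (sz_set i)).
rewrite exchange_big /=; apply: eq_bigr => p _.
rewrite -mulr_sumr; congr (_ * _).
rewrite /dz sumz_big intr_big big_filter.
rewrite -(big_mkord (fun i => nth true w i == false)
            (fun i => ev (bi p.2) (set_nth false w i true))).
rewrite /index_iota subn0; apply: eq_bigr => i _.
by rewrite ev_hev.
Qed.


Definition Tgt : ser -> Prop := fun g => g = lx K \/ g = lbr (ly K) (lx K) \/
   g = lbr (lbr (lbr (ly K) (lx K)) (ly K)) (lbr (lbr (ly K) (lx K)) (lx K)).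

Lemma tr_lie t : lie_gen Tgt (ev (tr_of t)).
Proof.
elim: t => [| | |a IHa b IHb] /=.
- by apply: lie_gen_in; left.
- by apply: lie_gen_in; right; left.
- by apply: lie_gen_in; right; right.
- exact: lie_gen_br.
Qed.

Fixpoint Gs (e : nat -> K) (ms : seq nat) : ser :=
  if ms is m :: ms' then sadd (sscale (e m) (ev (tt m))) (Gs e ms') else szero K.

Lemma Gs_lie e ms : lie_gen Tgt (Gs e ms).
Proof.
elim: ms => [|m ms IH] /=; first exact: lie_gen_zero.
by apply: lie_gen_add => //; apply: lie_gen_scale; exact: tr_lie.
Qed.

Lemma Gs_val e ms w : Gs e ms w = \sum_(m <- ms) e m * ev (tt m) w.
Proof.
elim: ms => [|m ms IH] /=; first by rewrite big_nil.
by rewrite big_cons /sadd /sscale IH.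
Qed.

Lemma iota_lt {i n} : i \in iota 0 n -> (i < n)%N.
Proof. by rewrite mem_iota add0n. Qed.

Lemma pick_sum k (F : nat -> K) : (k < Nb)%N ->
  \sum_(i <- iota 0 Nb) (if i == k then Dz else 0)%:~R * F i = (Dz%:~R) * F k.
Proof.
move=> Hk; rewrite (bigD1_seq k) ?iota_uniq ?(in_iota0 Hk) //= eqxx.
rewrite big1 ?addr0 // => i /negbTE ->.
by rewrite mulr0z mul0r.
Qed.

Lemma key {k w} : (k < Nb)%N -> (size w <= 7)%N ->
  Dz%:~R * ev (bi k) w = \sum_(m <- iota 0 Nt) (Em m k)%:~R * ev (tt m) w
     + \sum_(i <- iota 0 Nb) \sum_(y <- Yi i) y.2%:~R * (dz k y.1)%:~R * ev (bi i) w.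
Proof.
move=> Hk Hw.
rewrite -(pick_sum k (fun i => ev (bi i) w) Hk).
under eq_big_seq => i Hi do rewrite (C3_eq Hk (iota_lt Hi)) intrD mulrDl.
rewrite big_split; congr (_ + _).
- symmetry.
  transitivity (\sum_(m <- iota 0 Nt) \sum_(i <- iota 0 Nb)
                 (Em m k)%:~R * (tau m i)%:~R * ev (bi i) w).
    apply: eq_big_seq => m Hm.
    rewrite ev_hev (C2_eq (iota_lt Hm) Hw) sumz_big intr_big mulr_sumr.
    by apply: eq_bigr => i _; rewrite intrM -ev_hev mulrA.
  rewrite exchange_big; apply: eq_bigr => i _.
  by rewrite sumz_big intr_big mulr_suml; apply: eq_bigr => m _; rewrite intrM.
- apply: eq_bigr => i _.
  by rewrite sumz_big intr_big mulr_suml; apply: eq_bigr => y _; rewrite intrM.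
Qed.

Lemma main_eq f (l : seq (K*nat)) w :
  all (fun p => (p.2 < Nb)%N) l ->
  (forall u, (size u <= 7)%N -> f u = \sum_(p <- l) p.1 * ev (bi p.2) u) ->
  delta f = szero K -> (size w <= 7)%N ->
  Dz%:~R * f w = \sum_(m <- iota 0 Nt) (\sum_(p <- l) p.1 * (Em m p.2)%:~R) * ev (tt m) w.
Proof.
move=> Hl Hf Hd Hw.
rewrite Hf // mulr_sumr.
under eq_big_seq => p Hp do rewrite mulrCA (key (allP Hl _ Hp) Hw) mulrDr.
rewrite big_split.
have -> : \sum_(p <- l) p.1 * \sum_(i <- iota 0 Nb) \sum_(y <- Yi i)
            y.2%:~R * (dz p.2 y.1)%:~R * ev (bi i) w = 0.
  under eq_bigr => p _ do rewrite mulr_sumr.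
  rewrite exchange_big big1_seq // => i /andP[_ Hi].
  under eq_bigr => p _ do rewrite mulr_sumr.
  rewrite exchange_big big1_seq // => y /andP[_ Hy].
  have Hy7 : (size y.1 <= 7)%N.
    by have := allP (@C3_size 0 i isT (iota_lt Hi)) _ Hy.
  transitivity (y.2%:~R * ev (bi i) w * \sum_(p <- l) p.1 * (dz p.2 y.1)%:~R).
    by rewrite mulr_sumr; apply: eq_bigr => p _; ring.
  have Hfy : forall u, size u = size y.1 -> f u = \sum_(p <- l) p.1 * ev (bi p.2) u.
    by move=> u Hu; apply: Hf; rewrite Hu.
  by rewrite -(@delta_expand f l y.1 Hfy) Hd mulr0.
apply: etrans; first exact: (addr0 _).
under eq_bigr => p _ do rewrite mulr_sumr.
rewrite exchange_big; apply: eq_bigr => m _.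
by rewrite mulr_suml; apply: eq_bigr => p _; rewrite mulrA.
Qed.

End Proofs.

Theorem theorem5p8 (K : fieldType) (hK : [pchar K] =i pred0) (f : series K) :
  freeLie f -> delta f = szero K -> deg_le 7 f ->
  lie_gen (fun g => g = lx K \/ g = lbr (ly K) (lx K) \/
                    g = lbr (lbr (lbr (ly K) (lx K)) (ly K))
                            (lbr (lbr (ly K) (lx K)) (lx K))) f.
Proof.
move=> Hf Hd Hdeg.
have [l [Hl Hfl]] := @span_lie K f Hf.
have HD : (Dz%:~R : K) != 0.
  move/(pcharf0P K): hK => hK'.
  have -> : (Dz%:~R : K) = 60%:R by [].
  by rewrite hK'.
pose e m := (Dz%:~R : K)^-1 * \sum_(p <- l) p.1 * (Em m p.2)%:~R.
have -> : f = Gs K e (iota 0 Nt).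
  apply: functional_extensionality => w; rewrite Gs_val.
  case: (leqP (size w) 7) => Hw.
  - apply: (mulfI HD); rewrite (@main_eq K f l w Hl Hfl Hd Hw) mulr_sumr.
    by apply: eq_bigr => m _; rewrite /e !mulrA mulfV // mul1r.
  - rewrite Hdeg // big1_seq // => m /andP [_ Hm].
    have Hne : size w != tdeg (tt m).
      by rewrite neq_ltn (leq_ltn_trans (C2_deg (iota_lt Hm)) Hw) orbT.
    by rewrite (@ev_hom K (tt m) w Hne) mulr0.
exact: (@Gs_lie K e (iota 0 Nt)).
Qed.
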